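(* If $V$ is an $\Re$-module containing a vector $v$ with $Bv=\theta_0^*v$, $(B-\theta_1^* )(A-\theta_0)v=\varphi_1v$, $\alpha v=\zeta v$, $\beta v=\zeta^*v$, $\delta v=\eta v$, then there exists a unique $\Re$-module homomorphism $M_\nu(a,b,c)\to V$ sending $m_0$ to $v$.
   Context: $\mathbb F$ is algebraically closed with $\operatorname{char}\mathbb F\ne2$. The Racah algebra $\Re$ is the unital associative $\mathbb F$-algebra with generators $A,B,C,D$ and relations $[A,B]=[B,C]=[C,A]=2D$ together with the requirement that each of $\alpha:=[A,D]+AC-BA$, $\beta:=[B,D]+BA-CB$, $\gamma:=[C,D]+CB-AC$ is central in $\Re$; $\delta:=A+B+C$. For $a,b,c,\nu\in\mathbb F$ and $i\in\mathbb Z$: $\theta_i=(a+\tfrac\nu2-i)(a+\tfrac\nu2-i+1)$, $\theta_i^*=(b+\tfrac\nu2-i)(b+\tfrac\nu2-i+1)$, $\varphi_i=i(i-\nu-1)(a+b+c+\tfrac\nu2-i+2)(a+b-c+\tfrac\nu2-i+1)$, $\zeta=(c-b)(c+b+1)(a-\tfrac\nu2)(a+\tfrac\nu2+1)$, $\zeta^*=(a-c)(a+c+1)(b-\tfrac\nu2)(b+\tfrac\nu2+1)$, $\eta=\tfrac\nu2(\tfrac\nu2+1)+a(a+1)+b(b+1)+c(c+1)$. $M_\nu(a,b,c)$ is the $\Re$-module with $\mathbb F$-basis $\{m_i\}_{i\ge0}$ such that $Am_i=\theta_im_i+m_{i+1}$ ($i\ge0$), $Bm_0=\theta_0^*m_0$,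 $Bm_i=\theta_i^*m_i+\varphi_im_{i-1}$ ($i\ge1$), and $\alpha,\beta,\delta$ act as $\zeta,\zeta^*,\eta$. *)

(* Defs.v *)
From HB Require Import structures.
From mathcomp Require Import all_boot all_order all_algebra.
Set Implicit Arguments. Unset Strict Implicit. Unset Printing Implicit Defensive.
Import GRing.Theory.
Local Open Scope ring_scope.

Section Racah.
Variable F : fieldType.

Definition rtheta (a nu : F) (i : nat) : F :=
  (a + nu / 2%:R - i%:R) * (a + nu / 2%:R - i%:R + 1).
(* theta_i = rtheta a nu i,  theta*_i = rtheta b nu i *)
Definition rphi (a b c nu : F) (i : nat) : F :=
  i%:R * (i%:R - nu - 1) * (a + b + c + nu / 2%:R - i%:R + 2%:R)
  * (a + b - c + nu / 2%:R - i%:R + 1).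
Definition rzeta (a b c nu : F) : F :=
  (c - b) * (c + b + 1) * (a - nu / 2%:R) * (a + nu / 2%:R + 1).
Definition rzetas (a b c nu : F) : F :=
  (a - c) * (a + c + 1) * (b - nu / 2%:R) * (b + nu / 2%:R + 1).
Definition reta (a b c nu : F) : F :=
  nu / 2%:R * (nu / 2%:R + 1) + a * (a + 1) + b * (b + 1) + c * (c + 1).

Section Ops.
Variable V : lmodType F.
Variables (A B C D : V -> V).

Definition comm_op (X Y : V -> V) : V -> V := fun x => X (Y x) - Y (X x).
Definition alpha_op : V -> V := fun x => comm_op A D x + A (C x) - B (A x).
Definition beta_op  : V -> V := fun x => comm_op B D x + B (A x) - C (B x).
Definition gamma_op : V -> V := fun x => comm_op C D x + C (B x) - A (C x).
Definition delta_op : V -> V := fun x => A x + B x + C x.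

Definition central_op (X : V -> V) : Prop :=
  forall x, [/\ X (A x) = A (X x), X (B x) = B (X x),
                X (C x) = C (X x) & X (D x) = D (X x)].

Definition racah_module : Prop :=
  [/\ [/\ linear A, linear B, linear C & linear D],
      [/\ (forall x, comm_op A B x = 2%:R *: D x),
          (forall x, comm_op B C x = 2%:R *: D x) &
          (forall x, comm_op C A x = 2%:R *: D x)] &
      [/\ central_op alpha_op, central_op beta_op & central_op gamma_op]].
End Ops.

Definition racah_hom (U W : lmodType F)
  (A B C D : U -> U) (A' B' C' D' : W -> W) (f : U -> W) : Prop :=
  [/\ linear f, (forall x, f (A x) = A' (f x)), (forall x, f (B x) = B' (f x)),
      (forall x, f (C x) = C' (f x)) & (forall x, f (D x) = D' (f x))].

(* ---- The module M_nu(a,b,c): carrier {poly F}, with m_i = 'X^i. ---- *)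
Section M.
Variables (a b c nu : F).

Definition MA (p : {poly F}) : {poly F} :=
  \poly_(i < (size p).+1)
     (rtheta a nu i * p`_i + (if i is j.+1 then p`_j else 0)).
Definition MB (p : {poly F}) : {poly F} :=
  \poly_(i < size p) (rtheta b nu i * p`_i + rphi a b c nu i.+1 * p`_i.+1).
(* delta acts as eta, hence C = eta - A - B *)
Definition MC (p : {poly F}) : {poly F} := reta a b c nu *: p - MA p - MB p.
(* [A,B] = 2D, hence D = [A,B]/2 *)
Definition MD (p : {poly F}) : {poly F} := (2%:R)^-1 *: (MA (MB p) - MB (MA p)).
End M.

End Racah.

(* Main.v *)
Require Import Defs.
From HB Require Import structures.
From mathcomp Require Import all_boot all_order all_algebra.
From mathcomp Require Import ring.
Import GRing.Theory.
Local Open Scope ring_scope.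
Set Implicit Arguments. Unset Strict Implicit. Unset Printing Implicit Defensive.
Section Lin.
Variables (F : fieldType) (U W : lmodType F) (L : U -> W) (hL : linear L).
Lemma linD u w : L (u + w) = L u + L w.
Proof. by have := hL 1 u w; rewrite !scale1r. Qed.
Lemma lin0 : L 0 = 0.
Proof. by have := hL (-1) 0 0; rewrite !scaleN1r oppr0 addr0 addNr. Qed.
Lemma linZ k u : L (k *: u) = k *: L u.
Proof. by have := hL k u 0; rewrite !addr0 lin0 addr0. Qed.
Lemma linN u : L (- u) = - L u.
Proof. by rewrite -scaleN1r linZ scaleN1r. Qed.
Lemma linB u w : L (u - w) = L u - L w.
Proof. by rewrite linD linN. Qed.
End Lin.

Section Core.
Variables (F : fieldType) (V : lmodType F) (A B C D : V -> V).
Hypotheses (hA : linear A) (hB : linear B).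
Variables (a b c nu : F) (m : nat) (z x y w : V).
Let T' := (a + nu / 2%:R - (m%:R - 1)) * (a + nu / 2%:R - (m%:R - 1) + 1).
Let t0 := rtheta a nu m.
Let t1 := rtheta a nu m.+1.
Let s0 := rtheta b nu m.
Let s1 := rtheta b nu m.+1.
Let p0 := rphi a b c nu m.
Let p1 := rphi a b c nu m.+1.
Let ze := rzeta a b c nu.
Let et := reta a b c nu.
Hypotheses (hAz : A z = T' *: z + p0 *: x) (hAx : A x = t0 *: x + y)
  (hAy : A y = t1 *: y + w) (hBx : B x = s0 *: x + z) (hBy : B y = s1 *: y + p1 *: x).

Definition lc (c1 c2 c3 c4 c5 : F) := c1 *: z + c2 *: x + c3 *: y + c4 *: w + c5 *: B w.

Lemma lcD c1 c2 c3 c4 c5 d1 d2 d3 d4 d5 :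
  lc c1 c2 c3 c4 c5 + lc d1 d2 d3 d4 d5 = lc (c1+d1) (c2+d2) (c3+d3) (c4+d4) (c5+d5).
Proof.
rewrite /lc !scalerDl.
do 4 (rewrite [LHS]addrACA; congr (_ + _)).
Qed.
Lemma lcZ k c1 c2 c3 c4 c5 : k *: lc c1 c2 c3 c4 c5 = lc (k*c1) (k*c2) (k*c3) (k*c4) (k*c5).
Proof. by rewrite /lc !scalerDr !scalerA. Qed.
Lemma lcN c1 c2 c3 c4 c5 : - lc c1 c2 c3 c4 c5 = lc (-c1) (-c2) (-c3) (-c4) (-c5).
Proof. by rewrite -scaleN1r lcZ !mulN1r. Qed.
Lemma lc_eq c1 c2 c3 c4 c5 d1 d2 d3 d4 d5 : c1 = d1 -> c2 = d2 -> c3 = d3 -> c4 = d4 -> c5 = d5 ->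
  lc c1 c2 c3 c4 c5 = lc d1 d2 d3 d4 d5.
Proof. by move=> -> -> -> -> ->. Qed.
Lemma ez : z = lc 1 0 0 0 0. Proof. by rewrite /lc scale1r !scale0r !addr0. Qed.
Lemma ex : x = lc 0 1 0 0 0. Proof. by rewrite /lc scale1r !scale0r !addr0 add0r. Qed.
Lemma ey : y = lc 0 0 1 0 0. Proof. by rewrite /lc scale1r !scale0r !addr0 !add0r. Qed.
Lemma ew : w = lc 0 0 0 1 0. Proof. by rewrite /lc scale1r !scale0r !addr0 !add0r. Qed.
Lemma eBw : B w = lc 0 0 0 0 1. Proof. by rewrite /lc scale1r !scale0r !add0r. Qed.
Lemma lcA c1 c2 c3 c4 c5 : c4 = 0 -> c5 = 0 -> A (lc c1 c2 c3 c4 c5) =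
  lc (c1 * T') (c1 * p0 + c2 * t0) (c2 + c3 * t1) c3 0.
Proof.
move=> -> ->; rewrite {1}/lc !scale0r !addr0 !(linD hA) !(linZ hA) hAz hAx hAy.
rewrite ez ex ey ew; rewrite !(lcZ, lcD); apply: lc_eq; ring.
Qed.
Lemma lcB c1 c2 c3 c4 c5 : c1 = 0 -> c5 = 0 -> B (lc c1 c2 c3 c4 c5) =
  lc c2 (c2 * s0 + c3 * p1) (c3 * s1) 0 c4.
Proof.
move=> -> ->; rewrite {1}/lc !scale0r add0r !addr0 !(linD hB) !(linZ hB) hBx hBy.
rewrite ez ex ey eBw; rewrite !(lcZ, lcD); apply: lc_eq; ring.
Qed.

Ltac lcnorm H := repeat first [ rewrite lcD in H | rewrite lcN in H | rewrite lcZ in H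
   | (rewrite lcA in H; [| ring | ring]) | (rewrite lcB in H; [|ring|ring]) ].
Ltac lcnormG := repeat first [ rewrite lcD | rewrite lcN | rewrite lcZ ].

Lemma step (h2 : 2%:R != 0 :> F) (hD : forall u, 2%:R *: D u = A (B u) - B (A u))
  (hC : C x = et *: x - A x - B x)
  (hal : comm_op A D x + A (C x) - B (A x) = ze *: x) :
  B w = rtheta b nu m.+2 *: w + rphi a b c nu m.+2 *: y.
Proof.
have R : 2%:R *: (ze *: x) = 2%:R *: (comm_op A D x + A (C x) - B (A x)) by rewrite hal.
rewrite /comm_op !scalerDr !scalerN -(linZ hA _ (D x)) !hD hC in R.
rewrite ex in R. lcnorm R.
move/eqP: R; rewrite -subr_eq0 lcN lcD => /eqP R.
apply/eqP; rewrite -subr_eq0; apply/eqP.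
rewrite eBw ew ey. lcnormG.
transitivity (- (0 : V)); last by rewrite oppr0.
rewrite -[X in _ = - X]R lcN. apply: lc_eq; rewrite /T' /t0 /t1 /s0 /s1 /p0 /p1 /ze /et /rtheta /rphi /rzeta /reta;
  rewrite -?natr1; field; done.
Qed.
End Core.

Section Gen.
Variables (F : fieldType) (U W Y : lmodType F).
Lemma lin_comp (X : W -> Y) (Z : U -> W) : linear X -> linear Z -> linear (fun x => X (Z x)).
Proof. by move=> hX hZ k u w; rewrite hZ hX. Qed.
Lemma lin_addf (X Z : U -> W) : linear X -> linear Z -> linear (fun x => X x + Z x).
Proof. by move=> hX hZ k u w; rewrite hX hZ scalerDr addrACA. Qed.
Lemma lin_subf (X Z : U -> W) : linear X -> linear Z -> linear (fun x => X x - Z x).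
Proof. by move=> hX hZ k u w; rewrite hX hZ scalerBr opprD addrACA. Qed.
Lemma lin_scalef e (X : U -> W) : linear X -> linear (fun x => e *: X x).
Proof. by move=> hX k u w; rewrite hX scalerDr !scalerA mulrC. Qed.
Lemma lin_id : linear (fun x : U => x).
Proof. by []. Qed.

Lemma lin_sum (L : {poly F} -> W) (hL : linear L) n (G : 'I_n -> {poly F}) :
  L (\sum_(i < n) G i) = \sum_(i < n) L (G i).
Proof.
elim: n G => [|n IH] G; first by rewrite !big_ord0 lin0.
by rewrite !big_ord_recr /= (linD hL) IH.
Qed.
Lemma lin_expand (L : {poly F} -> W) (hL : linear L) p :
  L p = \sum_(i < size p) p`_i *: L 'X^i.
Proof.
rewrite -{1}(coefK p) poly_def (lin_sum hL); apply: eq_bigr => i _.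
exact: linZ.
Qed.
Lemma lin_ext (L1 L2 : {poly F} -> W) : linear L1 -> linear L2 ->
  (forall i, L1 'X^i = L2 'X^i) -> forall p, L1 p = L2 p.
Proof.
move=> h1 h2 hX p; rewrite (lin_expand h1) (lin_expand h2).
by apply: eq_bigr => i _; rewrite hX.
Qed.
End Gen.

Section Poly.
Variables (F : fieldType) (a b c nu : F).
Lemma coef_MA p j : (MA a nu p)`_j = rtheta a nu j * p`_j + (if j is k.+1 then p`_k else 0).
Proof.
rewrite coef_poly; case: ltnP => // h.
case: j h => [|j] h /=; rewrite !nth_default ?mulr0 ?addr0 //.
by apply: leq_trans h.
Qed.
Lemma coef_MB p j : (MB a b c nu p)`_j =
  rtheta b nu j * p`_j + rphi a b c nu j.+1 * p`_j.+1.
Proof.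
rewrite coef_poly; case: ltnP => // h.
rewrite !nth_default ?mulr0 ?addr0 //; exact: leq_trans h _.
Qed.
Lemma MA_lin : linear (MA a nu).
Proof.
move=> k p q; apply/polyP => j.
rewrite coefD coefZ !coef_MA !coefD !coefZ; case: j => [|j] /=; rewrite ?coefD ?coefZ; ring.
Qed.
Lemma MB_lin : linear (MB a b c nu).
Proof.
move=> k p q; apply/polyP => j.
rewrite coefD coefZ !coef_MB !coefD !coefZ; ring.
Qed.
Lemma MA_Xn i : MA a nu 'X^i = rtheta a nu i *: 'X^i + 'X^(i.+1).
Proof.
apply/polyP => j; rewrite coef_MA coefD coefZ !coefXn.
case: j => [|j] /=.
  by case: i => [|i] /=; rewrite ?mulr1 ?mulr0 ?addr0.
rewrite eqSS ?coefXn; case: eqP => [->|_]; rewrite ?eqxx ?mulr1 ?mulr0 ?addr0 ?add0r //.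
Qed.
Lemma rphi0 : rphi a b c nu 0 = 0.
Proof. by rewrite /rphi !mul0r. Qed.
Lemma MB_Xn i : MB a b c nu 'X^i = rtheta b nu i *: 'X^i + rphi a b c nu i *: 'X^(i.-1).
Proof.
apply/polyP => j; rewrite coef_MB coefD !coefZ !coefXn.
case: i => [|i] /=.
  rewrite rphi0 mul0r mulr0 !addr0; case: eqP => [->|_]; by rewrite ?mulr0.
rewrite eqSS; case: (eqVneq j i.+1) => [->|ne1].
  by rewrite eq_sym (ltn_eqF (ltnSn i)) !mulr0.
rewrite !mulr0 !add0r; case: (eqVneq j i) => [->|ne2].
  by rewrite !mulr1.
by rewrite !mulr0.
Qed.
End Poly.

Section Main.
Variables (F : fieldType) (V : lmodType F) (A B C D : V -> V) (a b c nu : F) (v : V).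
Hypotheses (h2 : 2%:R != 0 :> F) (hA : linear A) (hB : linear B) (hC : linear C) (hDl : linear D)
  (hAB : forall x, comm_op A B x = 2%:R *: D x)
  (hCA : forall x, comm_op C A x = 2%:R *: D x)
  (hal : central_op A B C D (alpha_op A B C D)).
Hypotheses (hB0 : B v = rtheta b nu 0 *: v)
  (hBA : B (A v - rtheta a nu 0 *: v) - rtheta b nu 1 *: (A v - rtheta a nu 0 *: v)
         = rphi a b c nu 1 *: v)
  (halpha : alpha_op A B C D v = rzeta a b c nu *: v)
  (hdelta : delta_op A B C v = reta a b c nu *: v).

Fixpoint vs (i : nat) : V := if i is j.+1 then A (vs j) - rtheta a nu j *: vs j else v.

Lemma Avs i : A (vs i) = rtheta a nu i *: vs i + vs i.+1.
Proof. by rewrite /= addrC subrK. Qed.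

Lemma delta_lin : linear (delta_op A B C).
Proof. by apply: lin_addf; [apply: lin_addf|]. Qed.
Lemma alpha_lin : linear (alpha_op A B C D).
Proof.
rewrite /alpha_op /comm_op.
apply: lin_subf; last exact: lin_comp.
apply: lin_addf; last exact: lin_comp.
by apply: lin_subf; apply: lin_comp.
Qed.

Lemma delta_A x : delta_op A B C (A x) = A (delta_op A B C x).
Proof.
rewrite /delta_op !(linD hA).
have e1 : A (B x) = B (A x) + 2%:R *: D x by rewrite -hAB /comm_op addrC subrK.
have e2 : C (A x) = A (C x) + 2%:R *: D x by rewrite -hCA /comm_op addrC subrK.
by rewrite e1 e2 !addrA [RHS]addrAC.
Qed.

Lemma delta_vs i : delta_op A B C (vs i) = reta a b c nu *: vs i.
Proof.
elim: i => [|i IH] //=.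
rewrite (linB delta_lin) (linZ delta_lin) delta_A IH (linZ hA) scalerBr !scalerA mulrC.
done.
Qed.

Lemma alpha_vs i : alpha_op A B C D (vs i) = rzeta a b c nu *: vs i.
Proof.
elim: i => [|i IH] //=.
have [hA' _ _ _] := hal (vs i).
rewrite (linB alpha_lin) (linZ alpha_lin) hA' IH (linZ hA) scalerBr !scalerA mulrC.
done.
Qed.

Lemma B_vs i : B (vs i) = rtheta b nu i *: vs i + rphi a b c nu i *: vs i.-1.
Proof.
suff H : forall m, B (vs m) = rtheta b nu m *: vs m + rphi a b c nu m *: vs m.-1 /\
   B (vs m.+1) = rtheta b nu m.+1 *: vs m.+1 + rphi a b c nu m.+1 *: vs m by case: (H i).
elim => [|m [IH1 IH2]].
  split; first by rewrite /= hB0 rphi0 scale0r addr0.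
  move/eqP: hBA; rewrite subr_eq => /eqP ->; by rewrite addrC.
split; first exact: IH2.
apply: (step (z := rphi a b c nu m *: vs m.-1) (x := vs m) (y := vs m.+1) (w := vs m.+2) (D := D) (C := C) hA hB) => //.
- case: m {IH1 IH2} => [|k].
    by rewrite rphi0 !scale0r (lin0 hA) scaler0 addr0.
  rewrite /= (linZ hA) Avs scalerDr !scalerA -(natr1 (R:=F) k) addrK [rtheta _ _ _ * _]mulrC (addrC (_ *: vs k) (vs k.+1)) addrK.
  done.
- exact: Avs.
- exact: Avs.
- move=> u; by rewrite -hAB.
- have := delta_vs m; rewrite /delta_op => <-.
  by rewrite [A _ + B _ + C _]addrC -addrA -opprD addrK.
- exact: alpha_vs.
Qed.

Definition fv (p : {poly F}) : V := \sum_(i < size p) p`_i *: vs i.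

Lemma fv_wide (n : nat) (p : {poly F}) : (size p <= n)%N -> fv p = \sum_(i < n) p`_i *: vs i.
Proof.
elim: n => [|n IH] hs.
  by rewrite /fv; move: hs; rewrite leqn0 => /eqP ->.
case: (leqP (size p) n) => h.
  by rewrite IH // big_ord_recr /= nth_default // scale0r addr0.
by have -> : n.+1 = size p by apply/eqP; rewrite eqn_leq hs h.
Qed.

Lemma fv_lin : linear fv.
Proof.
move=> k p q.
set n := maxn (size (k *: p + q)) (maxn (size p) (size q)).
rewrite (fv_wide (n := n)) ?leq_maxl // (fv_wide (n := n) (p := p)); last first.
  by rewrite (leq_trans _ (leq_maxr _ _)) // leq_maxl.
rewrite (fv_wide (n := n) (p := q)); last first.
  by rewrite (leq_trans _ (leq_maxr _ _)) // leq_maxr.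
rewrite scaler_sumr -big_split; apply: eq_bigr => i _.
by rewrite coefD coefZ scalerDl scalerA.
Qed.

Lemma fv_Xn i : fv 'X^i = vs i.
Proof.
rewrite /fv size_polyXn big_ord_recr /= coefXn eqxx scale1r big1 ?add0r // => j _.
by rewrite coefXn (ltn_eqF (ltn_ord j)) scale0r.
Qed.

Lemma fv_A p : fv (MA a nu p) = A (fv p).
Proof.
apply: (lin_ext (L1 := fun p => fv (MA a nu p)) (L2 := fun p => A (fv p))).
- exact: lin_comp fv_lin (MA_lin a nu).
- exact: lin_comp hA fv_lin.
move=> i; by rewrite MA_Xn (linD fv_lin) (linZ fv_lin) !fv_Xn Avs.
Qed.

Lemma fv_B p : fv (MB a b c nu p) = B (fv p).
Proof.
apply: (lin_ext (L1 := fun p => fv (MB a b c nu p)) (L2 := fun p => B (fv p))).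
- exact: lin_comp fv_lin (MB_lin a b c nu).
- exact: lin_comp hB fv_lin.
move=> i; by rewrite MB_Xn (linD fv_lin) !(linZ fv_lin) !fv_Xn B_vs.
Qed.

Lemma fv_delta p : delta_op A B C (fv p) = reta a b c nu *: fv p.
Proof.
apply: (lin_ext (L1 := fun p => delta_op A B C (fv p)) (L2 := fun p => reta a b c nu *: fv p)).
- exact: lin_comp delta_lin fv_lin.
- exact: lin_scalef fv_lin.
move=> i; by rewrite fv_Xn delta_vs.
Qed.

Lemma fv_C p : fv (MC a b c nu p) = C (fv p).
Proof.
rewrite /MC !(linB fv_lin) (linZ fv_lin) fv_A fv_B -fv_delta /delta_op.
by rewrite [A _ + B _ + C _]addrC -addrA -opprD addrK.
Qed.

Lemma fv_D p : fv (MD a b c nu p) = D (fv p).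
Proof.
rewrite /MD (linZ fv_lin) (linB fv_lin) !fv_A !fv_B !fv_A.
have := hAB (fv p); rewrite /comm_op => ->.
by rewrite scalerA mulVf // scale1r.
Qed.

Lemma fv_hom : racah_hom (MA a nu) (MB a b c nu) (MC a b c nu) (MD a b c nu) A B C D fv.
Proof. split; [exact: fv_lin | exact: fv_A | exact: fv_B | exact: fv_C | exact: fv_D]. Qed.

Lemma fv_1 : fv 1 = v.
Proof. by rewrite -(expr0 'X) fv_Xn. Qed.

Lemma fv_uniq g : racah_hom (MA a nu) (MB a b c nu) (MC a b c nu) (MD a b c nu) A B C D g ->
  g 1 = v -> forall p, g p = fv p.
Proof.
case=> hg gA _ _ _ g1.
apply: lin_ext => //; first exact: fv_lin.
move=> i; rewrite fv_Xn; elim: i => [|i IH]; first by rewrite expr0.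
have -> : 'X^(i.+1) = MA a nu 'X^i - rtheta a nu i *: 'X^i :> {poly F}.
  by rewrite MA_Xn addrC addKr.
by rewrite (linB hg) (linZ hg) gA IH.
Qed.
End Main.

Unset Implicit Arguments.

Theorem proposition3p7 (F : closedFieldType) (hF : (2%:R : F) != 0)
  (a b c nu : F) (V : lmodType F) (A B C D : V -> V)
  (hV : racah_module A B C D) (v : V)
  (hB0 : B v = rtheta b nu 0 *: v)
  (hBA : B (A v - rtheta a nu 0 *: v) - rtheta b nu 1 *: (A v - rtheta a nu 0 *: v)
         = rphi a b c nu 1 *: v)
  (halpha : alpha_op A B C D v = rzeta a b c nu *: v)
  (hbeta : beta_op A B C D v = rzetas a b c nu *: v)
  (hdelta : delta_op A B C v = reta a b c nu *: v) :
  exists f : {poly F} -> V,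
    [/\ racah_hom (MA a nu) (MB a b c nu) (MC a b c nu) (MD a b c nu) A B C D f,
        f 1 = v &
        forall g : {poly F} -> V,
          racah_hom (MA a nu) (MB a b c nu) (MC a b c nu) (MD a b c nu) A B C D g ->
          g 1 = v -> forall p, g p = f p].
Proof.
case: hV => [[lA lB lC lD] [hAB hBC hCA] [cal _ _]].
exists (fv A a nu v); split.
- exact: (fv_hom hF lA lB lC lD hAB hCA cal hB0 hBA halpha hdelta).
- exact: fv_1.
- move=> g hg g1; exact: (fv_uniq hg g1).
Qed.
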